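(* Let $F:\mathcal A\to\mathcal B$ be a triangle functor between triangulated categories. Then $F$ satisfies condition (WSE) if and only if $F$ is objective. Here (WSE) means: for each morphism $v:Y\to Z$ in $\mathcal A$ such that $F(v)$ is a splitting epimorphism in $\mathcal B$, there exists an object $Z'$ and a morphism $v':Z'\to Y$ in $\mathcal A$ such that $F(vv')$ is an isomorphism in $\mathcal B$.
   Context: $F$ is objective if every morphism $f$ in $\mathcal A$ with $F(f)=0$ factors through an object $K$ with $F(K)=0$. A triangle functor is a pair $(F,\xi)$ with $F$ additive and $\xi:F[1]\to[1]F$ a natural isomorphism such that $F$ sends distinguished triangles $(X,Y,Z,u,v,w)$ to distinguished triangles $(F(X),F(Y),F(Z),F(u),F(v),\xi_XF(w))$. *)

(* Defs.v *)
Set Implicit Arguments.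
Unset Strict Implicit.

Record PreaddData := {
  Obj : Type;
  Hom : Obj -> Obj -> Type;
  idm : forall X, Hom X X;
  comp : forall X Y Z, Hom Y Z -> Hom X Y -> Hom X Z;   (* comp g f = g o f *)
  addm : forall X Y, Hom X Y -> Hom X Y -> Hom X Y;
  zerom : forall X Y, Hom X Y;
  oppm : forall X Y, Hom X Y -> Hom X Y
}.
Arguments Hom : clear implicits.
Arguments Obj : clear implicits.
Arguments idm {p} X.
Arguments comp {p X Y Z} g f.
Arguments addm {p X Y} f g.
Arguments zerom {p} X Y.
Arguments oppm {p X Y} f.

Section Cat.
Variable C : PreaddData.

Definition is_preadditive : Prop :=
  (forall X Y (f : Hom C X Y), comp (idm Y) f = f) /\
  (forall X Y (f : Hom C X Y), comp f (idm X) = f) /\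
  (forall X Y Z W (f : Hom C X Y) (g : Hom C Y Z) (h : Hom C Z W),
      comp h (comp g f) = comp (comp h g) f) /\
  (forall X Y (f g h : Hom C X Y), addm f (addm g h) = addm (addm f g) h) /\
  (forall X Y (f g : Hom C X Y), addm f g = addm g f) /\
  (forall X Y (f : Hom C X Y), addm f (zerom X Y) = f) /\
  (forall X Y (f : Hom C X Y), addm f (oppm f) = zerom X Y) /\
  (forall X Y Z (g : Hom C Y Z) (f1 f2 : Hom C X Y),
      comp g (addm f1 f2) = addm (comp g f1) (comp g f2)) /\
  (forall X Y Z (g1 g2 : Hom C Y Z) (f : Hom C X Y),
      comp (addm g1 g2) f = addm (comp g1 f) (comp g2 f)).

Definition is_iso X Y (f : Hom C X Y) : Prop :=
  exists g : Hom C Y X, comp g f = idm X /\ comp f g = idm Y.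

Definition is_split_epi X Y (f : Hom C X Y) : Prop :=
  exists s : Hom C Y X, comp f s = idm Y.

Definition is_zero_obj (K : Obj C) : Prop := idm K = zerom K K.

Definition is_additive : Prop :=
  is_preadditive /\
  (exists K : Obj C, is_zero_obj K) /\
  (forall X Y : Obj C, exists (P : Obj C) (i1 : Hom C X P) (i2 : Hom C Y P)
       (p1 : Hom C P X) (p2 : Hom C P Y),
      comp p1 i1 = idm X /\ comp p2 i2 = idm Y /\
      comp p1 i2 = zerom Y X /\ comp p2 i1 = zerom X Y /\
      addm (comp i1 p1) (comp i2 p2) = idm P).
End Cat.

Record Functor (A B : PreaddData) := {
  fobj : Obj A -> Obj B;
  fmap : forall X Y, Hom A X Y -> Hom B (fobj X) (fobj Y)
}.
Arguments fobj {A B} f X.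
Arguments fmap {A B} f {X Y} _.

Definition is_additive_functor (A B : PreaddData) (F : Functor A B) : Prop :=
  (forall X, fmap F (idm X) = idm (fobj F X)) /\
  (forall X Y Z (g : Hom A Y Z) (f : Hom A X Y),
      fmap F (comp g f) = comp (fmap F g) (fmap F f)) /\
  (forall X Y (f g : Hom A X Y), fmap F (addm f g) = addm (fmap F f) (fmap F g)).

Definition is_equivalence (A B : PreaddData) (F : Functor A B) : Prop :=
  (forall X Y (f g : Hom A X Y), fmap F f = fmap F g -> f = g) /\
  (forall X Y (h : Hom B (fobj F X) (fobj F Y)), exists f : Hom A X Y, fmap F f = h) /\
  (forall Y : Obj B, exists (X : Obj A) (i : Hom B (fobj F X) Y), is_iso i).

(* Triangulated categories (axioms TR1-TR4, Stacks Project 13.3.1)     *)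
Record TriData := {
  tcat :> PreaddData;
  shift : Functor tcat tcat;
  dist : forall X Y Z (u : Hom tcat X Y) (v : Hom tcat Y Z)
                      (w : Hom tcat Z (fobj shift X)), Prop
}.
Arguments dist {t X Y Z} u v w.

Notation "X [1]" := (fobj (shift _) X) (at level 2, format "X [1]").

Definition is_triangulated (T : TriData) : Prop :=
  is_additive T /\
  is_additive_functor (shift T) /\ is_equivalence (shift T) /\
  (* TR1 (a): closure under isomorphisms of triangles *)
  (forall X Y Z (u : Hom T X Y) (v : Hom T Y Z) (w : Hom T Z X[1])
          X' Y' Z' (u' : Hom T X' Y') (v' : Hom T Y' Z') (w' : Hom T Z' X'[1])
          (a : Hom T X X') (b : Hom T Y Y') (c : Hom T Z Z'),
      is_iso a -> is_iso b -> is_iso c ->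
      comp u' a = comp b u -> comp v' b = comp c v ->
      comp w' c = comp (fmap (shift T) a) w ->
      dist u v w -> dist u' v' w') /\
  (forall X (K : Obj T), is_zero_obj K ->
      dist (idm X) (zerom X K) (zerom K X[1])) /\
  (forall X Y (u : Hom T X Y), exists Z (v : Hom T Y Z) (w : Hom T Z X[1]),
      dist u v w) /\
  (* TR2: rotation *)
  (forall X Y Z (u : Hom T X Y) (v : Hom T Y Z) (w : Hom T Z X[1]),
      dist u v w <-> dist v w (oppm (fmap (shift T) u))) /\
  (* TR3: completion of morphisms of triangles *)
  (forall X Y Z (u : Hom T X Y) (v : Hom T Y Z) (w : Hom T Z X[1])
          X' Y' Z' (u' : Hom T X' Y') (v' : Hom T Y' Z') (w' : Hom T Z' X'[1])
          (a : Hom T X X') (b : Hom T Y Y'),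
      dist u v w -> dist u' v' w' -> comp u' a = comp b u ->
      exists c : Hom T Z Z',
        comp v' b = comp c v /\ comp w' c = comp (fmap (shift T) a) w) /\
  (* TR4: octahedral axiom *)
  (forall X Y Z (f : Hom T X Y) (g : Hom T Y Z)
          Q1 (p1 : Hom T Y Q1) (d1 : Hom T Q1 X[1])
          Q2 (p2 : Hom T Z Q2) (d2 : Hom T Q2 X[1])
          Q3 (p3 : Hom T Z Q3) (d3 : Hom T Q3 Y[1]),
      dist f p1 d1 -> dist (comp g f) p2 d2 -> dist g p3 d3 ->
      exists (a : Hom T Q1 Q2) (b : Hom T Q2 Q3),
        dist a b (comp (fmap (shift T) p1) d3) /\
        comp a p1 = comp p2 g /\ comp d2 a = d1 /\
        comp b p2 = p3 /\ comp d3 b = comp (fmap (shift T) f) d2).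

Definition is_triangle_functor (A B : TriData) (F : Functor A B)
    (xi : forall X : Obj A, Hom B (fobj F X[1]) (fobj F X)[1]) : Prop :=
  is_additive_functor F /\
  (forall X, is_iso (xi X)) /\
  (forall X Y (f : Hom A X Y),
      comp (xi Y) (fmap F (fmap (shift A) f)) = comp (fmap (shift B) (fmap F f)) (xi X)) /\
  (forall X Y Z (u : Hom A X Y) (v : Hom A Y Z) (w : Hom A Z X[1]),
      dist u v w -> dist (fmap F u) (fmap F v) (comp (xi X) (fmap F w))).

Definition objective (A B : PreaddData) (F : Functor A B) : Prop :=
  forall X Y (f : Hom A X Y), fmap F f = zerom (fobj F X) (fobj F Y) ->
    exists (K : Obj A) (g : Hom A X K) (h : Hom A K Y),
      is_zero_obj (fobj F K) /\ f = comp h g.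

Definition WSE (A B : PreaddData) (F : Functor A B) : Prop :=
  forall Y Z (v : Hom A Y Z), is_split_epi (fmap F v) ->
    exists (Z' : Obj A) (v' : Hom A Z' Y), is_iso (fmap F (comp v v')).

Arguments is_triangle_functor {A B} F xi.
Arguments objective {A B} F.
Arguments WSE {A B} F.

(* Main.v *)
Require Import Defs.
Set Implicit Arguments.
Unset Strict Implicit.

Ltac dpre HC := destruct HC as (cidl & cidr & cassoc & aassoc & acomm & a0 & aopp & cdistl & cdistr).

Section Alg.
Variable C : PreaddData.
Hypothesis HC : is_preadditive C.

Lemma add_cancel X Y (f g h : Hom C X Y) : addm f g = addm f h -> g = h.
Proof.
  pose proof HC as H0; dpre H0. intro E.
  assert (E2 : addm (oppm f) (addm f g) = addm (oppm f) (addm f h)) by (rewrite E; reflexivity).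
  rewrite !aassoc in E2. rewrite (acomm _ _ (oppm f) f), aopp in E2.
  rewrite (acomm _ _ (zerom _ _) g), (acomm _ _ (zerom _ _) h), !a0 in E2. exact E2.
Qed.

Lemma idem_zero X Y (x : Hom C X Y) : addm x x = x -> x = zerom X Y.
Proof.
  pose proof HC as H0; dpre H0. intro E.
  apply (@add_cancel _ _ x). rewrite a0. exact E.
Qed.

Lemma comp_f0 X Y Z (f : Hom C Y Z) : comp f (zerom X Y) = zerom X Z.
Proof.
  pose proof HC as H0; dpre H0. apply idem_zero. rewrite <- cdistl, a0. reflexivity.
Qed.

Lemma comp_0f X Y Z (f : Hom C X Y) : comp (zerom Y Z) f = zerom X Z.
Proof.
  pose proof HC as H0; dpre H0. apply idem_zero. rewrite <- cdistr, a0. reflexivity.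
Qed.

Lemma opp_unique X Y (x y : Hom C X Y) : addm x y = zerom X Y -> y = oppm x.
Proof.
  pose proof HC as H0; dpre H0. intro E. rewrite <- (aopp _ _ x) in E.
  eapply add_cancel; exact E.
Qed.

Lemma opp_opp X Y (x : Hom C X Y) : oppm (oppm x) = x.
Proof.
  pose proof HC as H0; dpre H0. symmetry. apply opp_unique.
  rewrite acomm. apply aopp.
Qed.

Lemma comp_fopp X Y Z (g : Hom C Y Z) (f : Hom C X Y) : comp g (oppm f) = oppm (comp g f).
Proof.
  pose proof HC as H0; dpre H0. apply opp_unique. rewrite <- cdistl, aopp. apply comp_f0.
Qed.

Lemma comp_oppf X Y Z (g : Hom C Y Z) (f : Hom C X Y) : comp (oppm g) f = oppm (comp g f).
Proof.
  pose proof HC as H0; dpre H0. apply opp_unique. rewrite <- cdistr, aopp. apply comp_0f.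
Qed.

Lemma opp0 (X Y : Obj C) : oppm (zerom X Y) = zerom X Y.
Proof.
  pose proof HC as H0; dpre H0. symmetry. apply opp_unique. apply a0.
Qed.

Lemma zero_to (K : Obj C) : is_zero_obj K -> forall X (f : Hom C X K), f = zerom X K.
Proof.
  pose proof HC as H0; dpre H0. intros HK X f.
  rewrite <- (cidl _ _ f), HK. apply comp_0f.
Qed.

Lemma zero_from (K : Obj C) : is_zero_obj K -> forall X (f : Hom C K X), f = zerom K X.
Proof.
  pose proof HC as H0; dpre H0. intros HK X f.
  rewrite <- (cidr _ _ f), HK. apply comp_f0.
Qed.
End Alg.

Section Fun.
Variables A B : PreaddData.
Hypothesis HA : is_preadditive A.
Hypothesis HB : is_preadditive B.
Variable G : Functor A B.
Hypothesis HG : is_additive_functor G.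

Lemma fmap_zero X Y : fmap G (zerom X Y) = zerom (fobj G X) (fobj G Y).
Proof.
  pose proof HA as H0; dpre H0. destruct HG as (Gid & Gcomp & Gadd).
  apply (idem_zero HB). rewrite <- Gadd, a0. reflexivity.
Qed.

Lemma fmap_opp X Y (f : Hom A X Y) : fmap G (oppm f) = oppm (fmap G f).
Proof.
  pose proof HA as H0; dpre H0. destruct HG as (Gid & Gcomp & Gadd).
  apply (opp_unique HB). rewrite <- Gadd, aopp. apply fmap_zero.
Qed.

Lemma fmap_iso X Y (f : Hom A X Y) : is_iso f -> is_iso (fmap G f).
Proof.
  destruct HG as (Gid & Gcomp & Gadd). intros [g [H1 H2]].
  exists (fmap G g). rewrite <- !Gcomp, H1, H2, !Gid. split; reflexivity.
Qed.
End Fun.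

Section Tri.
Variable T : TriData.
Hypothesis HT : is_triangulated T.

Ltac dT := let H := fresh in pose proof HT as H;
  destruct H as ([Hpre [[K0 HK0] Hbip]] & Hsh & Heq & TR1a & TR1b & TR1c & TR2 & TR3 & TR4).

Lemma tpre : is_preadditive T.
Proof. dT. exact Hpre. Qed.

Lemma L1 X Y Z (u : Hom T X Y) (v : Hom T Y Z) (w : Hom T Z (fobj (shift T) X)) :
  dist u v w -> comp v u = zerom X Z.
Proof.
  dT. intro D. pose proof Hpre as H0; dpre H0.
  destruct (TR3 _ _ _ _ _ _ _ _ _ _ _ _ (idm X) u (TR1b X K0 HK0) D eq_refl) as [c [E1 E2]].
  rewrite E1. apply (comp_f0 Hpre).
Qed.

Lemma Lback X Y Z (f : Hom T X Y) (b : Hom T Y Z) (c : Hom T Z (fobj (shift T) X)) :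
  dist f b c -> exists W (a : Hom T W X) (b' : Hom T Y (fobj (shift T) W)),
    dist a f b' /\ (c = zerom _ _ -> a = zerom _ _).
Proof.
  dT. intro D. pose proof Hpre as H0; dpre H0.
  destruct Hsh as (Sid & Scomp & Sadd).
  destruct Heq as (Sfaith & Sfull & Sess).
  destruct (Sess Z) as [W [i [j [Hji Hij]]]].
  destruct (Sfull _ _ (oppm (comp c i))) as [a Ha].
  exists W, a, (comp j b). split.
  - apply TR2. rewrite Ha, (opp_opp Hpre).
    apply (TR1a _ _ _ f b c _ _ _ f (comp j b) (comp c i) (idm X) (idm Y) j).
    all: try (exists (idm X); split; apply cidl).
    all: try (exists (idm Y); split; apply cidl).
    all: try (exists i; split; assumption).
    all: try (rewrite ?cidl, ?cidr; reflexivity).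
    all: try assumption.
    rewrite <- cassoc, Hij, cidr, Sid, cidl. reflexivity.
  - intro Hc. apply Sfaith. rewrite Ha, Hc, (comp_0f Hpre), (opp0 Hpre).
    symmetry. apply (fmap_zero Hpre Hpre). split; auto.
Qed.

Lemma L2 Z X K Y (u : Hom T Z X) (g : Hom T X K) (h : Hom T K (fobj (shift T) Z))
  (f : Hom T X Y) : dist u g h -> comp f u = zerom Z Y -> exists c, f = comp c g.
Proof.
  dT. intros D Hf. pose proof Hpre as H0; dpre H0.
  destruct (Lback (TR1b Y K0 HK0)) as [W [a [b' [D2 _]]]].
  destruct (TR3 _ _ _ _ _ _ _ _ _ _ _ _ (zerom Z W) f D D2) as [c [E1 E2]].
  - rewrite Hf. apply (comp_f0 Hpre).
  - exists c. rewrite <- E1, cidl. reflexivity.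
Qed.

Lemma L3 X Y Z W (u : Hom T X Y) (v : Hom T Y Z) (w : Hom T Z (fobj (shift T) X))
  (g : Hom T W Y) : dist u v w -> comp v g = zerom W Z -> exists g', g = comp u g'.
Proof.
  dT. intros D Hg. pose proof Hpre as H0; dpre H0.
  pose proof Hsh as Hsh'. destruct Hsh' as (Sid & Scomp & Sadd).
  destruct Heq as (Sfaith & Sfull & Sess).
  pose proof (proj1 (TR2 _ _ _ _ _ _) (TR1b W K0 HK0)) as D1.
  pose proof (proj1 (TR2 _ _ _ _ _ _) D) as D2.
  destruct (TR3 _ _ _ _ _ _ _ _ _ _ _ _ g (zerom K0 Z) D1 D2) as [c [E1 E2]].
  - rewrite Hg. symmetry. apply (comp_f0 Hpre).
  - rewrite (comp_oppf Hpre), (comp_fopp Hpre), Sid, cidr in E2.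
    assert (E3 : comp (fmap (shift T) u) c = fmap (shift T) g).
    { rewrite <- (opp_opp Hpre (comp _ c)), E2. apply (opp_opp Hpre). }
    destruct (Sfull _ _ c) as [g' Hg'].
    exists g'. apply Sfaith. rewrite Scomp, Hg', E3. reflexivity.
Qed.

Lemma L4 X Y Z (u : Hom T X Y) (v : Hom T Y Z) (w : Hom T Z (fobj (shift T) X)) :
  dist u v w -> is_iso u -> is_zero_obj (Z : Obj T).
Proof.
  dT. intros D [ui [Hu1 Hu2]]. pose proof Hpre as H0; dpre H0.
  pose proof Hsh as Hsh'. destruct Hsh' as (Sid & Scomp & Sadd).
  assert (Hv : v = zerom Y Z).
  { rewrite <- (cidr _ _ v), <- Hu2, cassoc, (L1 D). apply (comp_0f Hpre). }
  pose proof (proj1 (TR2 _ _ _ _ _ _) D) as D2.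
  pose proof (L1 (proj1 (TR2 _ _ _ _ _ _) D2)) as E. rewrite (comp_oppf Hpre) in E.
  assert (E' : comp (fmap (shift T) u) w = zerom _ _).
  { rewrite <- (opp_opp Hpre (comp _ w)), E. apply (opp0 Hpre). }
  assert (Hw : w = zerom _ _).
  { rewrite <- (cidl _ _ w), <- Sid, <- Hu1, Scomp, <- cassoc, E'. apply (comp_f0 Hpre). }
  destruct (L2 (f:=idm Z) D2) as [c Hc].
  - rewrite ?cidr, ?cidl. exact Hv.
  - unfold is_zero_obj. rewrite Hc, Hw. apply (comp_f0 Hpre).
Qed.

Lemma L5 X Y Z (u : Hom T X Y) (v : Hom T Y Z) (w : Hom T Z (fobj (shift T) X)) :
  dist u v w -> is_zero_obj (Z : Obj T) -> is_iso u.
Proof.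
  dT. intros D HZ. pose proof Hpre as H0; dpre H0.
  assert (Hv : v = zerom _ _) by (apply (zero_to Hpre HZ)).
  assert (Hw : w = zerom _ _) by (apply (zero_from Hpre HZ)).
  destruct (L3 (g:=idm Y) D) as [g' Hg'].
  { rewrite Hv. apply (comp_0f Hpre). }
  destruct (Lback D) as [W [a [b' [D2 Ha]]]]. specialize (Ha Hw).
  destruct (L3 (g:=addm (idm X) (oppm (comp g' u))) D2) as [e He].
  - rewrite cdistl, (comp_fopp Hpre), cassoc, <- Hg', cidl, cidr. apply aopp.
  - rewrite Ha, (comp_0f Hpre) in He.
    exists g'. split; [|symmetry; exact Hg'].
    rewrite <- (opp_opp Hpre (comp g' u)), (opp_unique Hpre He). apply (opp_opp Hpre).
Qed.
End Tri.

Theorem theorem1 (A B : TriData) (F : Functor A B)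
    (xi : forall X : Obj A, Hom B (fobj F (fobj (shift A) X)) (fobj (shift B) (fobj F X))) :
  is_triangulated A -> is_triangulated B -> is_triangle_functor F xi ->
  (WSE F <-> objective F).
Proof.
  intros HA HB [HF [Hxi [Hnat Hdist]]].
  pose proof (tpre HA) as HpA. pose proof (tpre HB) as HpB.
  pose proof HA as HA'. destruct HA' as (_ & _ & _ & _ & _ & TR1c & _).
  pose proof HpA as H0; dpre H0.
  pose proof HpB as H1. destruct H1 as (bidl & bidr & bassoc & _).
  pose proof HF as HF'. destruct HF' as (Fid & Fcomp & Fadd).
  split.
  - intros HW X Y f Hf.
    destruct (TR1c X Y f) as [Z [v [w D]]].
    destruct (Lback HA D) as [W [a [b' [D2 _]]]].
    pose proof (Hdist _ _ _ _ _ _ D2) as FD2.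
    destruct (L3 HB (g:=idm _) FD2) as [s Hs].
    { rewrite bidr. exact Hf. }
    destruct (HW _ _ a (ex_intro _ s (eq_sym Hs))) as [Z' [p Hp]].
    destruct (TR1c _ _ (comp a p)) as [K [g [h D3]]].
    pose proof (L4 HB (Hdist _ _ _ _ _ _ D3) Hp) as HK.
    destruct (L2 HA (f:=f) D3) as [c Hc].
    { rewrite cassoc, (L1 HA D2). apply (comp_0f HpA). }
    exists K, g, c. split; assumption.
  - intros HO Y Z v [s Hs].
    destruct (TR1c Y Z v) as [C [w [x D]]].
    pose proof (L1 HB (Hdist _ _ _ _ _ _ D)) as E.
    rewrite <- Fcomp in E.
    assert (Hw : fmap F w = zerom _ _).
    { rewrite <- (bidr _ _ (fmap F w)), <- Hs, bassoc, <- Fcomp, E.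
      apply (comp_0f HpB). }
    destruct (HO _ _ w Hw) as [K [g [h [HK Hgh]]]].
    destruct (TR1c _ _ g) as [M [m [n D3]]].
    destruct (Lback HA D3) as [W [a [b' [D4 _]]]].
    destruct (L3 HA (g:=a) D) as [v' Hv'].
    { rewrite Hgh, <- cassoc, (L1 HA D4). apply (comp_f0 HpA). }
    exists W, v'. rewrite <- Hv'.
    exact (L5 HB (Hdist _ _ _ _ _ _ D4) HK).
Qed.
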